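(* Let $0\to N\xrightarrow{i} G\xrightarrow{p} Q\to 1$ be a short exact sequence of groups with $N$ abelian (written additively), and let $Z^1(G,N)$ be the abelian group (under pointwise addition) of crossed homomorphisms $\phi:G\to N$. With the multiplication $(\phi\diamond\psi)(x):=\phi(i(\psi(x)))$, $Z^1(G,N)$ is an associative (not necessarily unital) ring, and the map $Res:Z^1(G,N)\to End_Q(N)$, $\phi\mapsto\phi\circ i$, is a ring homomorphism.
   Context: $G$ acts on $N$ by conjugation, $x\cdot n=x+n-x$, and a crossed homomorphism satisfies $\phi(x+y)=\phi(x)+x\cdot\phi(y)$. This induces a $Q$-module structure on $N$; $End_Q(N)$ is the ring of $Q$-module endomorphisms of $N$ under pointwise addition and composition. *)

(* Defs.v *)
(* G, Q are (possibly infinite) groups via mathcomp's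
   monoid.v groupType (written multiplicatively, %g); N is an abelian
   group (zmodType, written additively). *)
From HB Require Import structures.
From mathcomp Require Import ssreflect ssrfun ssrbool eqtype choice ssrnat seq.
From mathcomp Require Import monoid ssralg.
Set Implicit Arguments. Unset Strict Implicit. Unset Printing Implicit Defensive.
Import GRing.Theory.

Section Defs.
Variables (N : zmodType) (G Q : groupType) (i : N -> G) (p : G -> Q).

Definition short_exact : Prop :=
  [/\ (forall a b : N, i (a + b)%R = (i a * i b)%g),
      injective i,
      (forall x y : G, p (x * y)%g = (p x * p y)%g),
      (forall q : Q, exists x : G, p x = q)
    & (forall x : G, p x = 1%g <-> exists n : N, i n = x)].

(* act x n m  <->  x . n = m, i.e. i m = x i(n) x^-1 (conjugation in G). *)
Definition act (x : G) (n m : N) : Prop := i m = (x * i n * x^-1)%g.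

Definition crossed_hom (phi : G -> N) : Prop :=
  forall (x y : G) (m : N), act x (phi y) m -> phi (x * y)%g = (phi x + m)%R.

Definition qact (q : Q) (n m : N) : Prop := exists x : G, p x = q /\ act x n m.

Definition EndQ (f : N -> N) : Prop :=
  (forall a b : N, f (a + b)%R = (f a + f b)%R) /\
  (forall (q : Q) (n m : N), qact q n m -> qact q (f n) (f m)).

Definition zaddf (phi psi : G -> N) : G -> N := fun x => (phi x + psi x)%R.
Definition zoppf (phi : G -> N) : G -> N := fun x => (- phi x)%R.
Definition zzero : G -> N := fun _ => 0%R.

Definition diamond (phi psi : G -> N) : G -> N := fun x => phi (i (psi x)).

Definition Res (phi : G -> N) : N -> N := fun n => phi (i n).

End Defs.

(* Main.v *)
Require Import Defs.
From mathcomp Require Import ssreflect ssrfun ssrbool eqtype choice ssrnat seq.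
From mathcomp Require Import monoid ssralg.


From Stdlib Require Import FunctionalExtensionality.
Set Implicit Arguments.
Import GRing.Theory.
Local Open Scope group_scope.

Section Helpers.
Variables (N : zmodType) (G Q : groupType) (i : N -> G) (p : G -> Q).
Hypothesis H : short_exact i p.

Lemma i_add a b : i (a + b)%R = i a * i b.
Proof. by case: H. Qed.
Lemma i_inj : injective i.
Proof. by case: H. Qed.
Lemma p_mul x y : p (x * y) = p x * p y.
Proof. by case: H. Qed.
Lemma p_ker x : p x = 1 <-> exists n, i n = x.
Proof. by case: H. Qed.

Lemma i0 : i 0%R = 1.
Proof.
have := i_add 0%R 0%R; rewrite GRing.addr0 => E.
by apply: (mulgI (i 0%R)); rewrite -E mulg1.
Qed.

Lemma p1 : p 1 = 1.
Proof.
have := p_mul 1 1; rewrite mulg1 => E.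
by apply: (mulgI (p 1)); rewrite -E mulg1.
Qed.

Lemma act_ex x n : exists m, act i x n m.
Proof.
have : p (x * i n * x^-1) = 1.
  rewrite !p_mul.
  have -> : p (i n) = 1 by apply/p_ker; exists n.
  by rewrite mulg1 -p_mul mulgV p1.
by case/p_ker => m Em; exists m.
Qed.

Lemma act_uniq x n m1 m2 : act i x n m1 -> act i x n m2 -> m1 = m2.
Proof. by rewrite /act => E1 E2; apply: i_inj; rewrite E1 E2. Qed.

Lemma act_add x a b ma mb : act i x a ma -> act i x b mb -> act i x (a + b)%R (ma + mb)%R.
Proof.
rewrite /act !i_add => ->->.
by rewrite !mulgA mulgVK.
Qed.

Lemma i_comm a b : i a * i b = i b * i a.
Proof. by rewrite -!i_add GRing.addrC. Qed.

Lemma act_i a n : act i (i a) n n.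
Proof. by rewrite /act i_comm mulgK. Qed.

Lemma ch_add phi : crossed_hom i phi ->
  forall a b, phi (i (a + b)%R) = (phi (i a) + phi (i b))%R.
Proof. by move=> C a b; rewrite i_add (C _ _ _ (act_i a _)). Qed.

Lemma ch_equiv phi : crossed_hom i phi ->
  forall x n m, act i x n m -> act i x (phi (i n)) (phi (i m)).
Proof.
move=> C x n m E.
have [k Ek] := act_ex x (phi (i n)).
have E1 := C _ _ _ Ek.
have Exn : x * i n = i m * x by rewrite E mulgVK.
have E2 := C (i m) x _ (act_i m (phi x)).
rewrite Exn E2 GRing.addrC in E1.
by move/GRing.addrI: E1 => ->.
Qed.
End Helpers.

Theorem lemma7 (N : zmodType) (G Q : groupType) (i : N -> G) (p : G -> Q) :
  short_exact i p ->
  (* Z^1(G,N) is an abelian group under pointwise addition *)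
  crossed_hom i (@zzero N G) /\
  (forall phi psi, crossed_hom i phi -> crossed_hom i psi ->
     crossed_hom i (zaddf phi psi)) /\
  (forall phi, crossed_hom i phi -> crossed_hom i (zoppf phi)) /\
  (* closed under the product *)
  (forall phi psi, crossed_hom i phi -> crossed_hom i psi ->
     crossed_hom i (diamond i phi psi)) /\
  (* associativity *)
  (forall phi psi chi, crossed_hom i phi -> crossed_hom i psi -> crossed_hom i chi ->
     diamond i (diamond i phi psi) chi = diamond i phi (diamond i psi chi)) /\
  (* distributivity *)
  (forall phi psi chi, crossed_hom i phi -> crossed_hom i psi -> crossed_hom i chi ->
     diamond i phi (zaddf psi chi) = zaddf (diamond i phi psi) (diamond i phi chi)) /\
  (forall phi psi chi, crossed_hom i phi -> crossed_hom i psi -> crossed_hom i chi ->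
     diamond i (zaddf phi psi) chi = zaddf (diamond i phi chi) (diamond i psi chi)) /\
  (* Res : Z^1(G,N) -> End_Q(N) is a ring homomorphism *)
  (forall phi, crossed_hom i phi -> EndQ i p (Res i phi)) /\
  (forall phi psi, crossed_hom i phi -> crossed_hom i psi ->
     Res i (zaddf phi psi) = (fun n => Res i phi n + Res i psi n)%R) /\
  (forall phi psi, crossed_hom i phi -> crossed_hom i psi ->
     Res i (diamond i phi psi) = Res i phi \o Res i psi).
Proof.
move=> H.
have Hadd := ch_add H; have Heq := ch_equiv H.
split.
  move=> x y m E; rewrite /zzero GRing.add0r.
  by symmetry; apply: (act_uniq H E); rewrite /act (i0 H) mulg1 mulgV.
split.
  move=> phi psi C1 C2 x y m E; rewrite /zaddf.
  have [m1 E1] := act_ex H x (phi y); have [m2 E2] := act_ex H x (psi y).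
  rewrite (C1 _ _ _ E1) (C2 _ _ _ E2) (act_uniq H E (act_add H E1 E2)).
  by rewrite -!GRing.addrA (GRing.addrCA m1).
split.
  move=> phi C x y m E; rewrite /zoppf.
  have [m1 E1] := act_ex H x (phi y).
  have Ez := act_add H E E1; rewrite GRing.addNr in Ez.
  have Ez' : act i x 0%R 0%R by rewrite /act (i0 H) mulg1 mulgV.
  have -> : m = (- m1)%R.
    by apply/eqP; rewrite -GRing.subr_eq0 GRing.opprK (act_uniq H Ez Ez').
  by rewrite (C _ _ _ E1) GRing.opprD.
split.
  move=> phi psi C1 C2 x y m E; rewrite /diamond.
  have [m1 E1] := act_ex H x (psi y).
  rewrite (C2 _ _ _ E1) Hadd //.
  by rewrite (act_uniq H E (Heq _ C1 _ _ _ E1)).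
split; first by [].
split.
  move=> phi psi chi C1 _ _; apply: functional_extensionality => x; rewrite /diamond /zaddf.
  exact: Hadd.
split; first by [].
split.
  move=> phi C; split; first exact: Hadd.
  move=> q n m [x [Px E]]; exists x; split => //.
  exact: Heq.
split; first by [].
by [].
Qed.
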